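(* Let $n$ be even and let $A$ be an $n\times n$ row substochastic matrix with row sums $r_1,\dots,r_n$. Then there is a listing $x_1,\dots,x_n$ of the row sums (i.e. $x_k=r_{\tau(k)}$ for some permutation $\tau$ of $\{1,\dots,n\}$) such that $$\operatorname{per}(I-A)\le (1+x_1x_2)(1+x_3x_4)\cdots(1+x_{n-1}x_n).$$
   Context: An $n\times n$ matrix is row substochastic if all its entries are nonnegative and each row sum is at most $1$. The permanent is $\operatorname{per}(M)=\sum_{\pi\in S_n}\prod_i m_{i\pi(i)}$, and $I$ is the identity matrix. *)

(* Defs.v *)
From HB Require Import structures.
From mathcomp Require Import all_boot all_order all_algebra all_fingroup.
Set Implicit Arguments. Unset Strict Implicit. Unset Printing Implicit Defensive.
Import Order.TTheory GRing.Theory Num.Theory.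
Local Open Scope ring_scope.

Definition per (R : comPzRingType) (n : nat) (M : 'M[R]_n) : R :=
  \sum_(s : 'S_n) \prod_(i < n) M i (s i).

Definition row_substochastic (R : realFieldType) (n : nat) (A : 'M[R]_n) : Prop :=
  (forall i j, 0 <= A i j) /\ (forall i, \sum_(j < n) A i j <= 1).

Definition row_sum (R : pzRingType) (n : nat) (A : 'M[R]_n) (i : 'I_n) : R :=
  \sum_(j < n) A i j.

(* Main.v *)
Require Import Defs.
From HB Require Import structures.
From mathcomp Require Import all_boot all_order all_algebra all_fingroup.
From mathcomp Require Import zify.
Import Order.TTheory GRing.Theory Num.Theory.
Local Open Scope ring_scope.
Set Implicit Arguments. Unset Strict Implicit. Unset Printing Implicit Defensive.

Section Cyc.
Variable R : realFieldType.
Variable T : finType.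
Variable r : T -> R.
Hypothesis r0 : forall i, 0 <= r i.
Hypothesis r1 : forall i, r i <= 1.

Definition valid (f : T -> T) (M : {set T}) : bool :=
  [forall i in M, (f i \in M) && (f i != i)] &&
  [forall i in M, forall j in M, (f i == f j) ==> (i == j)].

Lemma validP f (M : {set T}) : reflect ((forall i, i \in M -> (f i \in M) /\ (f i != i))
   /\ {in M &, injective f}) (valid f M).
Proof.
apply: (iffP andP) => [[/forall_inP H1 /forall_inP H2]|[H1 H2]]; split.
- by move=> i /H1 /andP.
- move=> i j Hi Hj Hf; have /forall_inP/(_ j Hj) := H2 i Hi.
  by rewrite Hf eqxx => /eqP.
- by apply/forall_inP => i /H1 [-> ->].
- apply/forall_inP => i Hi; apply/forall_inP => j Hj; apply/implyP => /eqP Hf.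
  by rewrite (H2 i j Hi Hj Hf).
Qed.

Definition gset (M : {set T}) : R := \prod_(i in M) (- r i).
Definition Tf (f : T -> T) : R := \sum_(M : {set T} | valid f M) gset M.

Fixpoint Qr (l : seq R) : R :=
  match l with a :: b :: t => (1 + a * b) * Qr t | _ => 1 end.

Lemma disjointP (A B : {set T}) : reflect (forall x, x \in A -> x \in B -> False) [disjoint A & B].
Proof.
rewrite -setI_eq0; apply: (iffP eqP) => [H x xA xB|H].
  have : x \in A :&: B by rewrite inE xA xB.
  by rewrite H inE.
by apply/setP => x; rewrite !inE; apply/negP => /andP[/H h /h].
Qed.
Definition validP0 f M := @validP f M.
Arguments validP0 {f M}.
Lemma valid0 f : valid f set0.
Proof. by apply/validP0; split => [i|i j]; rewrite inE. Qed.

Lemma L3 f : 0 <= Tf f /\ exists s : seq T,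
  [/\ uniq s, ~~ odd (size s), all (fun i => f i != i) s & Tf f <= Qr (map r s)].
Proof.
have [k] := ubnP #|[set i | f i != i]|; elim: k f => // k IH f Hk.
case: (pickP (fun M : {set T} => valid f M && (M != set0))) => [M0 HM0 | Hnone]; last first.
  have -> : Tf f = 1.
    rewrite /Tf (bigD1 set0) ?valid0 //= big1 ?addr0; first by rewrite /gset big_set0.
    by move=> M /andP[vM nM]; have := Hnone M; rewrite vM nM.
  split => //; exists [::]; split => //=.
case: (@arg_minnP _ M0 (fun M : {set T} => valid f M && (M != set0)) (fun M : {set T} => #|M|) HM0).
move=> C /andP[vC nC] minC.
have [vC1 vC2] := validP _ _ vC.
set f' := fun k => if k \in C then k else f k.
have imC : [set f x | x in C] = C.
  apply/eqP; rewrite eqEcard card_in_imset // leqnn andbT.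
  by apply/subsetP => y /imsetP[x xC ->]; case: (vC1 x xC).
have preC : forall M i, valid f M -> C \subset M -> i \in M -> f i \in C -> i \in C.
  move=> M i /validP0[_ injM] CM iM fC; move: fC; rewrite -{1}imC => /imsetP[c cC Hc].
  by rewrite (injM i c iM (subsetP CM c cC) Hc).
have vb : forall N, valid f' N = valid f N && [disjoint N & C].
  move=> N; apply/(validP f' N)/andP.
  - move=> [H1 H2].
    have nCi : forall i, i \in N -> i \notin C.
      by move=> i /H1 []; rewrite /f'; case: (i \in C); rewrite ?eqxx.
    have ff : forall i, i \in N -> f' i = f i by move=> i /nCi; rewrite /f' => /negbTE ->.
    split.
    + apply/validP0; split.
      * by move=> i iN; rewrite -ff //; apply: H1.
      * by move=> i j iN jN; rewrite -(ff i) // -(ff j) //; apply: H2.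
    + by apply/disjointP => i /nCi /negP.
  - move=> [/validP0[H1 H2] /disjointP dN].
    have ff : forall i, i \in N -> f' i = f i.
      by move=> i iN; rewrite /f'; case: ifP => // /(dN i iN).
    split.
    + by move=> i iN; rewrite ff //; apply: H1.
    + by move=> i j iN jN; rewrite ff // ff //; apply: H2.
have vd : forall M, valid f M -> C \subset M -> valid f (M :\: C).
  move=> M vM CM; have [H1 H2] := validP _ _ vM; apply/validP0; split.
  - move=> i; rewrite !inE => /andP[iC iM]; have [fM fi] := H1 i iM.
    rewrite fM fi andbT; split => //; apply/negP => fC; by rewrite (preC M i vM CM iM fC) in iC.
  - by move=> i j; rewrite !inE => /andP[_ iM] /andP[_ jM]; apply: H2.
have ve : forall N, valid f N -> [disjoint N & C] -> valid f (N :|: C).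
  move=> N /validP0[H1 H2] /disjointP dN; apply/validP0; split.
  - move=> i; rewrite !inE => /orP[iN|iC].
    + by have [-> ->] := H1 i iN.
    + by have [-> ->] := vC1 i iC; rewrite orbT.
  - move=> i j; rewrite !inE => /orP[iN|iC] /orP[jN|jC] Hf.
    + exact: H2.
    + by have [fi _] := H1 i iN; have [fj _] := vC1 j jC; case: (dN (f i) fi); rewrite Hf.
    + by have [fj _] := H1 j jN; have [fi _] := vC1 i iC; case: (dN (f j) fj); rewrite -Hf.
    + exact: vC2.
have vc : forall M, valid f M -> ~~ (C \subset M) -> [disjoint M & C].
  move=> M vM nCM; apply/negPn/negP => nd.
  have vI : valid f (M :&: C).
    have [H1 H2] := validP _ _ vM; apply/validP0; split.
    - move=> i; rewrite !inE => /andP[iM iC].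
      by have [-> ->] := H1 i iM; have [-> _] := vC1 i iC.
    - by move=> i j; rewrite !inE => /andP[iM _] /andP[jM _]; apply: H2.
  have nI : M :&: C != set0 by rewrite setI_eq0.
  have := minC _ (introT andP (conj vI nI)) => Hle.
  have : M :&: C == C by rewrite eqEcard subsetIr Hle.
  by move/eqP/setIidPr => CM; rewrite CM in nCM.
have dec : Tf f = (1 + gset C) * Tf f'.
  rewrite mulrDl mul1r addrC /Tf. rewrite (bigID (fun M : {set T} => C \subset M)) /=; congr (_ + _).
  - rewrite mulr_sumr.
    rewrite [RHS](reindex_onto (fun M => M :\: C) (fun N => N :|: C)); last first.
      move=> N; rewrite vb => /andP[_ /disjointP dN]; apply/setP => x; rewrite !inE.
      case: (boolP (x \in C)) => xC /=; last by rewrite orbF.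
      by apply/esym/negP => /dN/(_ xC).
    apply: eq_big => M.
    + apply/andP/andP.
      * move=> [vM CM]; split; first by rewrite vb vd //=; apply/disjointP => x; rewrite inE => /andP[/negP].
        by apply/eqP/setP => x; rewrite !inE; case: (boolP (x \in C)) => xC /=; [by rewrite (subsetP CM x xC) ?orbT | by rewrite ?andbT ?orbF ?andTb].
      * rewrite vb => -[/andP[vMC dMC] /eqP HM]; rewrite -HM; split; first exact: ve.
        exact: subsetUr.
    + move=> /andP[vM CM].
      have EM : M :\: C :|: C = M.
        by apply/setP => x; rewrite !inE; case: (boolP (x \in C)) => xC /=; [by rewrite (subsetP CM x xC) ?orbT | by rewrite ?andbT ?orbF ?andTb].
      rewrite mulrC /gset -bigU /=.
        by apply: eq_bigl => x; rewrite !inE; case: (boolP (x \in C)) => xC /=; [by rewrite (subsetP CM x xC) ?orbT | by rewrite ?andbT ?orbF ?andTb].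
      by apply/disjointP => x; rewrite inE => /andP[/negP].
  - apply: eq_bigl => M; rewrite vb; apply/andP/andP => -[vM H]; split => //.
    + exact: vc.
    + have [c cC] := set0Pn _ nC; apply/negP => CM.
      by have /disjointP := H; move/(_ c (subsetP CM c cC)); apply.
have [a aC] := set0Pn _ nC.
have [faC fa] := vC1 a aC.
set b := f a.
have [IH0 [s' [us' es' as' bs']]] : 0 <= Tf f' /\ exists s : seq T,
  [/\ uniq s, ~~ odd (size s), all (fun i => f' i != i) s & Tf f' <= Qr (map r s)].
  apply: IH; rewrite -ltnS; apply: leq_trans Hk; rewrite ltnS.
  apply: proper_card; apply/properP; split.
  - by apply/subsetP => i; rewrite !inE /f'; case: (i \in C); rewrite ?eqxx.
  - by exists a; rewrite !inE ?fa // /f' aC eqxx.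
have gCb : `|gset C| <= r a * r b.
  rewrite /gset normr_prod (bigD1 a) //= (bigD1 b) /=; last by rewrite faC fa.
  rewrite mulrA normrN (ger0_norm (r0 a)) normrN (ger0_norm (r0 b)).
  rewrite -[X in _ <= X]mulr1 ler_wpM2l ?mulr_ge0 //.
  apply: prodr_ile1 => i _; rewrite normr_ge0 /= normrN ger0_norm //.
have ab1 : r a * r b <= 1 by rewrite -[1](mulr1 1); apply: ler_pM.
move: gCb; rewrite ler_norml => /andP[gl gu].
split.
  rewrite dec mulr_ge0 // -lerBlDl sub0r; apply: le_trans gl; by rewrite lerN2.
exists [:: a, b & s']; split.
- rewrite /= inE negb_or eq_sym fa us' andbT.
  apply/andP; split; apply/negP => /(allP as'); rewrite /f' ?aC ?faC eqxx //.
- by rewrite /= negbK.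
- rewrite /= fa /=; have [_ ->] := vC1 b faC; rewrite /=.
  apply/allP => i /(allP as'); rewrite /f'; by case: (i \in C); rewrite ?eqxx.
- rewrite dec /=; apply: ler_pM => //.
  + rewrite -lerBlDl sub0r; apply: le_trans gl; by rewrite lerN2.
  + by rewrite lerD2l.
Qed.

End Cyc.

Set Implicit Arguments. Unset Strict Implicit. Unset Printing Implicit Defensive.

Section L2s.
Variable R : realFieldType.
Variable T : finType.
Variable r : T -> R.
Variable f : T -> T.

Definition sfun (M : {set T}) k := if valid f M && (k \in M) then f k else k.

Lemma sfun_inj M : injective (sfun M).
Proof.
rewrite /sfun; case: (boolP (valid f M)) => vM /=; last by [].
have [H1 H2] := (elimT (validP _ _) vM).
move=> x y; case: (boolP (x \in M)) => xM; case: (boolP (y \in M)) => yM.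
- exact: H2.
- by move=> E; have [fx _] := H1 x xM; rewrite E in fx; rewrite fx in yM.
- by move=> E; have [fy _] := H1 y yM; rewrite -E in fy; rewrite fy in xM.
- by [].
Qed.

Definition sig_of M : {perm T} := perm (@sfun_inj M).

Definition Pf : R := \sum_(s : {perm T}) \prod_i ((i == s i)%:R - r i * (f i == s i)%:R).

Lemma L2 : Pf = (\prod_i (1 - r i * (f i == i)%:R)) * Tf r f.
Proof.
rewrite /Pf (bigID (fun s : {perm T} => [forall i, (s i == i) || (s i == f i)])) /=.
rewrite [X in _ + X]big1 ?addr0; last first.
  move=> s /forallPn [i]; rewrite negb_or => /andP[si sf].
  rewrite (bigD1 i) //= (eq_sym i) (eq_sym (f i)) (negbTE si) (negbTE sf) mulr0 subr0 mul0r.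
  by [].
rewrite /Tf mulr_sumr.
rewrite (reindex_onto sig_of (fun s : {perm T} => [set i | s i != i])); last first.
  move=> s /forallP Hs; apply/permP => k; rewrite permE /sfun inE.
  case: (boolP (s k == k)) => sk /=; first by rewrite andbF (eqP sk).
  have -> : valid f [set i | s i != i].
    apply/validP; split.
    - move=> i; rewrite !inE => si.
      have sfi : s i = f i by move: (Hs i); rewrite (negbTE si) => /eqP.
      rewrite -sfi si; split => //; apply/negP => /eqP /perm_inj E.
      by rewrite E eqxx in si.
    - move=> i j; rewrite !inE => si sj.
      have sfi : s i = f i by move: (Hs i); rewrite (negbTE si) => /eqP.
      have sfj : s j = f j by move: (Hs j); rewrite (negbTE sj) => /eqP.
      by rewrite -sfi -sfj => /perm_inj.
  by move: (Hs k); rewrite (negbTE sk) => /eqP.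
have Hp : forall M, ([forall i, (sig_of M i == i) || (sig_of M i == f i)] && ([set i | sig_of M i != i] == M)) = valid f M.
  move=> M; case: (boolP (valid f M)) => vM.
  + have [H1 H2] := (elimT (validP _ _) vM).
    have moved : [set i | sig_of M i != i] = M.
      apply/setP => i; rewrite inE permE /sfun vM /=.
      by case: (boolP (i \in M)) => iM /=; [have [_ ->] := H1 i iM | rewrite eqxx].
    rewrite moved eqxx andbT; apply/forallP => i; rewrite permE /sfun vM /=.
    by case: (i \in M); rewrite eqxx ?orbT.
  + apply/negbTE; apply/negP => /andP[_ /eqP moved].
    have E : M = set0.
      by rewrite -moved; apply/setP => i; rewrite !inE permE /sfun (negbTE vM) eqxx.
    by rewrite E valid0 in vM.
apply: eq_big => M; first exact: Hp.
rewrite Hp => vM; have [H1 H2] := (elimT (validP _ _) vM).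
rewrite (bigID (fun i => i \in M)) /= mulrC; congr (_ * _).
+ rewrite [RHS](bigID (fun i => i \in M)) /= [X in _ = X * _]big1 ?mul1r.
    apply: eq_bigr => i iM; rewrite permE /sfun vM (negbTE iM) /= eqxx //.
  move=> i iM; have [_ fi] := H1 i iM; by rewrite (negbTE fi) mulr0 subr0.
+ rewrite /gset; apply: eq_bigr => i iM; rewrite permE /sfun vM iM /=.
  have [_ fi] := H1 i iM; rewrite eq_sym (negbTE fi) eqxx mulr1 sub0r //.
Qed.

Lemma Pf_le (r0 : forall i, 0 <= r i) (r1 : forall i, r i <= 1) : Pf <= Tf r f.
Proof.
rewrite L2; have [T0 _] := L3 r0 r1 f.
rewrite -[X in _ <= X]mul1r ler_wpM2r //; apply: prodr_ile1 => i _.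
case: (f i == i); rewrite ?mulr1 ?mulr0 ?subr0 ?lexx ?ler01 //.
by rewrite subr_ge0 r1 /= lerBlDr lerDl.
Qed.

End L2s.

Set Implicit Arguments. Unset Strict Implicit. Unset Printing Implicit Defensive.

Section Fin.
Variable R : realFieldType.

Lemma prodQ (l : seq R) :
  \prod_(k < (size l)./2) (1 + l`_(k.*2) * l`_(k.*2).+1) = Qr l.
Proof.
have [m] := ubnP (size l); elim: m l => // m IH [|a [|b t]] /= Hs.
- by rewrite big_ord0.
- by rewrite big_ord0.
- rewrite big_ord_recl /=; congr (_ * _).
  rewrite -IH; first by []. lia.
Qed.

Lemma QrCat (l1 l2 : seq R) : ~~ odd (size l1) -> Qr (l1 ++ l2) = Qr l1 * Qr l2.
Proof.
have [m] := ubnP (size l1); elim: m l1 => // m IH [|a [|b t]] /= Hs Ho.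
- by rewrite mul1r.
- by [].
- rewrite IH ?mulrA //; last by rewrite negbK in Ho.
  lia.
Qed.

Lemma Qr_ge1 (l : seq R) : all (fun x => 0 <= x) l -> 1 <= Qr l.
Proof.
have [m] := ubnP (size l); elim: m l => // m IH [|a [|b t]] /= Hs //.
move=> /and3P[a0 b0 ht].
rewrite -[1](mul1r 1); apply: ler_pM => //.
- by rewrite mulr1 lerDl mulr_ge0.
- by apply: IH => //; lia.
Qed.

End Fin.

Lemma mk_tau (R : realFieldType) n (r : 'I_n -> R) (e : seq 'I_n) :
  uniq e -> size e = n ->
  exists tau : 'S_n, [seq r (tau i) | i <- enum 'I_n] = map r e.
Proof.
case: n r e => [|n] r e ue se.
  exists 1%g; case: e ue se => // _ _; by rewrite enum_ord0.
have inj : injective (fun i : 'I_n.+1 => nth ord0 e i).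
  move=> i j /eqP; rewrite nth_uniq ?se // => /eqP; exact: val_inj.
exists (perm inj).
rewrite -[in RHS](mkseq_nth ord0 e) se /mkseq -val_enum_ord -map_comp.
rewrite -map_comp; apply: eq_map => i /=; by rewrite permE.
Qed.

Unset Implicit Arguments.

Lemma L1 (R : realFieldType) (n : nat) (A : 'M[R]_n) (hA : row_substochastic A) :
  let r := row_sum A in
  let w := fun i l => if r i == 0 then (l == i)%:R else A i l / r i in
  per (1%:M - A) = \sum_(g : {ffun 'I_n -> 'I_n}) (\prod_i w i (g i)) * Pf r g
  /\ (forall i l, 0 <= w i l) /\ (forall i, \sum_l w i l = 1).
Proof.
move=> r w; have [A0 A1] := hA.
have r0 : forall i, 0 <= r i by move=> i; apply: sumr_ge0.
have w0 : forall i l, 0 <= w i l.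
  by move=> i l; rewrite /w; case: ifP => _; rewrite ?ler0n ?divr_ge0.
have wsum : forall i, \sum_l w i l = 1.
  move=> i; rewrite /w; case: (boolP (r i == 0)) => ri0.
    by rewrite (bigD1 i) //= eqxx big1 ?addr0 // => j /negbTE ->.

  by rewrite -mulr_suml divff.
have wr : forall i j, r i * w i j = A i j.
  move=> i j; rewrite /w; case: ifP => ri0.
    move/eqP: ri0 => ri0; rewrite ri0 mul0r.
    by apply/esym; apply: (psumr_eq0P (P := xpredT) (fun k _ => A0 i k) ri0).
  by rewrite mulrC divfK ?ri0.
have ent : forall i j, (1%:M - A) i j = \sum_l w i l * ((i == j)%:R - r i * (l == j)%:R).
  move=> i j; rewrite !mxE.
  under eq_bigr do rewrite mulrBr.
  rewrite sumrB -mulr_suml wsum mul1r; congr (_ - _).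
  rewrite (bigD1 j) //= eqxx mulr1 big1 ?addr0; first by rewrite mulrC wr.
  by move=> l /negbTE ->; rewrite mulr0 mulr0.
split; last by split.
rewrite /per.
under eq_bigr do under eq_bigr do rewrite ent.
under eq_bigr do rewrite bigA_distr_bigA.
rewrite exchange_big /=; apply: eq_bigr => g _.
rewrite /Pf mulr_sumr; apply: eq_bigr => s _.
by rewrite big_split.
Qed.

Theorem mainTheorem9 (R : realFieldType) (n : nat) (A : 'M[R]_n)
  (hn : ~~ odd n) (hA : row_substochastic A) :
  exists tau : 'S_n,
    let x := [seq row_sum A (tau i) | i <- enum 'I_n] in
    per (1%:M - A) <= \prod_(k < n./2) (1 + x`_(k.*2) * x`_(k.*2).+1).
Proof.
have [A0 A1] := hA.
have [EL1 [w0 wsum]] := @L1 _ _ _ hA.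
set r := row_sum A in EL1 w0 wsum.
have r0 : forall i, 0 <= r i by move=> i; apply: sumr_ge0.
have r1 : forall i, r i <= 1 by move=> i; apply: A1.
pose B (t : 'S_n) := let x := [seq row_sum A (t i) | i <- enum 'I_n] in
   \prod_(k < n./2) (1 + x`_(k.*2) * x`_(k.*2).+1).
have [tm _ Hmax] := @arg_maxP _ _ _ (1%g : 'S_n) xpredT B isT.
exists tm; change (per (1%:M - A) <= B tm).
have key : forall f : 'I_n -> 'I_n, Pf r f <= B tm.
  move=> f; apply: le_trans (Pf_le f r0 r1) _.
  have [_ [s [us es as_ bs]]] := L3 r0 r1 f.
  set t' := [seq i <- enum 'I_n | i \notin s].
  set e := s ++ t'.
  have ue : uniq e by rewrite cat_uniq us filter_uniq ?enum_uniq // andbT; apply/hasPn => i; rewrite mem_filter => /andP[].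
  have se : size e = n.
    rewrite -[RHS](size_enum_ord n); apply: perm_size; apply: uniq_perm => //; first exact: enum_uniq.
    by move=> i; rewrite mem_cat mem_filter mem_enum andbT orbN.
  have [t Ht] := mk_tau r ue se.
  apply: le_trans (Hmax t isT).
  apply: le_trans bs _.
  have -> : B t = Qr (map r e).
    rewrite /B /= Ht -(prodQ (map r e)) size_map se //.
  rewrite /e map_cat QrCat ?size_map //.
  have q1 : 1 <= Qr (map r s) by apply: Qr_ge1; apply/allP => x /mapP[i _ ->]; exact: r0.
  have q2 : 1 <= Qr (map r t') by apply: Qr_ge1; apply/allP => x /mapP[i _ ->]; exact: r0.
  rewrite -[X in X <= _]mulr1 ler_wpM2l //; exact: le_trans ler01 q1.
rewrite EL1; apply: le_trans.
  apply: ler_sum => g _; apply: ler_wpM2l; last exact: key.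
  by apply: prodr_ge0 => i _; apply: w0.
rewrite -mulr_suml -(bigA_distr_bigA (fun i l => if r i == 0 then (l == i)%:R else A i l / r i)) big1 ?mul1r // => i _; apply: wsum.
Qed.
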